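(* Let $g\ge1$ and $n\ge3$. \begin{enumerate} \item For all $1\le r\le n$: $r^r\,t_{g,n-r+1}^{r+1}\le t_{g,n}^2$, with equality iff $r=1$. \item If $(n,g)\neq(3,1)$, then for all $1\le r\le n-1$: $(r+1)^r\,t_{g,n-r}^{r+1}\le 2t_{g,n-1}^2$, with equality iff $r=1$ or $(g,r,n)\in\{(1,2,4),(2,2,3)\}$. \item If $(n,g)\notin\{(4,1),(4,2),(5,1)\}$, then for all $1\le r\le n-2$: $(r+2)^r\,t_{g,n-r-1}^{r+1}\le 3t_{g,n-2}^2$, with equality iff $r=1$ or $(g,r,n)=(3,2,4)$. \end{enumerate}
   Context: Sylvester sequences: $s_{g,1}=g+1$, $s_{g,k+1}=s_{g,k}(s_{g,k}-1)+1$, $t_{g,k}=s_{g,k}-1$. *)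

(* Defs.v *)
From mathcomp Require Import all_boot.
(* Sylvester sequences: s_{g,1} = g+1, s_{g,k+1} = s_{g,k}(s_{g,k}-1)+1,
   t_{g,k} = s_{g,k} - 1.  Indexed from k = 1; sylv_s g 0 is a junk value
   (equal to sylv_s g 1) never used in the statement. *)
Definition sylv_step (x : nat) : nat := x * (x - 1) + 1.
Definition sylv_s (g k : nat) : nat := iter k.-1 sylv_step g.+1.
Definition sylv_t (g k : nat) : nat := sylv_s g k - 1.

(* Main.v *)
Require Import Defs.
From mathcomp Require Import all_boot zify ring.

Definition f (y : nat) := y * y.+1.
Definition T x j := iter j f x.
Definition W j := T 1 j.

Lemma s_eq g k : sylv_s g k = (sylv_t g k).+1.
Proof.
rewrite /sylv_t /sylv_s; case: k.-1 => [|i] /=; first by rewrite subn1.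
rewrite /sylv_step; lia.
Qed.

Lemma t_succ g k : 1 <= k -> sylv_t g k.+1 = f (sylv_t g k).
Proof.
case: k => // k _.
have h2 := s_eq g k.+2; have h1 := s_eq g k.+1.
move: h2; rewrite /sylv_s /= -/(sylv_s g k.+1) h1 /sylv_step /f.
set y := sylv_t g k.+1. lia.
Qed.

Lemma t1 g : sylv_t g 1 = g.
Proof. by rewrite /sylv_t /sylv_s /= subn1. Qed.

Lemma t_shift g m j : 1 <= m -> sylv_t g (m + j) = T (sylv_t g m) j.
Proof.
move=> hm; elim: j => [|j IH]; first by rewrite addn0.
by rewrite addnS t_succ ?IH //; lia.
Qed.

Lemma T_ge x j : x <= T x j.
Proof. elim: j => // j IH; rewrite /T iterS -/(T x j) /f; nia. Qed.

Lemma t_ge g k : g <= sylv_t g k.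
Proof.
case: k => [|k]; first by rewrite /sylv_t /sylv_s /= subn1.
rewrite -add1n t_shift // t1; exact: T_ge.
Qed.

Lemma TS x j : T x j.+1 = f (T x j).
Proof. by []. Qed.

Lemma lemA x j : 1 <= x -> x * W j <= T x j.
Proof.
move=> hx; elim: j => [|j IH]; first by rewrite /W /T muln1.
rewrite /W !TS -/(W j) /f.
have hW : 1 <= W j by apply: T_ge.
nia.
Qed.

Lemma lemB x j : 1 <= x -> x ^ j.+2 * W j ^ 2 <= T x j ^ 2.
Proof.
move=> hx; elim: j => [|j IH]; first by rewrite /W /T /= !muln1.
have hA := @lemA x j hx.
have hW : 1 <= W j by apply: T_ge.
rewrite /W !TS -/(W j) /f.
set w := W j in IH hA hW *; set t := T x j in IH hA *.
have h1 : x * (w.+1) ^ 2 <= (t.+1) ^ 2.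
  have : x * w.+1 ^ 2 <= (x * w).+1 ^ 2.
    have : (x - 1) * (x * w ^ 2 - 1) >= 0 by [].
    nia.
  move=> h; apply: (leq_trans h); rewrite leq_exp2r //; lia.
have -> : x ^ j.+3 * (w * w.+1) ^ 2 = (x ^ j.+2 * w ^ 2) * (x * w.+1 ^ 2).
  rewrite expnS !expnMn; ring.
rewrite expnMn; exact: leq_mul.
Qed.

Lemma W3 : W 3 = 42. Proof. by []. Qed.

Lemma pow2ge k : k + 7 <= 2 ^ (k + 4).
Proof.
elim: k => // k IH; have -> : k.+1 + 4 = (k+4).+1 by lia.
rewrite expnS; lia.
Qed.

Lemma Wbig k : (k + 6) ^ (k + 4) < W (k + 3) ^ 2.
Proof.
elim: k => [|k IH]; first by rewrite W3.
have -> : k.+1 + 6 = k + 7 by lia.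
have -> : k.+1 + 4 = k + 5 by lia.
have -> : k.+1 + 3 = (k + 3).+1 by lia.
rewrite /W TS -/(W (k+3)) /f.
set w := W (k + 3) in IH *.
have h1 : ((k + 6) ^ (k + 4)) ^ 2 < (w ^ 2) ^ 2.
  by rewrite ltn_exp2r.
have h2 : (k + 7) ^ (k + 5) <= ((k + 6) ^ (k + 4)) ^ 2.
  rewrite -expnM mulnC expnM.
  have h3 : (2 * (k + 7)) ^ (k + 4) <= ((k + 6) ^ 2) ^ (k + 4).
    by rewrite leq_exp2r //; lia.
  apply: leq_trans h3.
  have -> : k + 5 = (k + 4).+1 by lia.
  rewrite expnMn expnS; apply: leq_mul => //.
  exact: pow2ge.
have h4 : (w ^ 2) ^ 2 <= (w * w.+1) ^ 2.
  rewrite leq_exp2r //; nia.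
apply: leq_ltn_trans h2 _; exact: leq_trans h1 h4.
Qed.

Lemma key x j c : 1 <= x -> 3 <= j -> c <= 3 ->
  (j + c) ^ j.+1 * x ^ j.+2 < T x j ^ 2.
Proof.
move=> hx hj hc.
have [k ->] : exists k, j = k + 3 by exists (j - 3); lia.
have hB := @lemB x (k + 3) hx.
apply: leq_trans hB.
rewrite mulnC ltn_mul2l; apply/andP; split; first by rewrite expn_gt0 hx.
apply: leq_ltn_trans (Wbig k).
have -> : (k + 3).+1 = k + 4 by lia.
rewrite leq_exp2r //; lia.
Qed.

Lemma T0 x : T x 0 = x. Proof. by []. Qed.
Lemma T1 x : T x 1 = x * x.+1. Proof. by []. Qed.
Lemma T2 x : T x 2 = x * x.+1 * (x * x.+1).+1. Proof. by []. Qed.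

Lemma strict_wrap a b (P : Prop) : a < b -> ~ P -> a <= b /\ (a = b <-> P).
Proof. move=> h nP; split; first exact: ltnW. split=> // e; move: h; rewrite e ltnn //. Qed.

Lemma core1 x j : 1 <= x ->
  (j.+1)^(j.+1) * x^(j.+2) <= T x j ^ 2 /\
  ((j.+1)^(j.+1) * x^(j.+2) = T x j ^ 2 <-> j = 0 \/ (j = 1 /\ x = 1)).
Proof.
move=> hx.
case: j => [|[|[|j]]].
- rewrite T0 mul1n; split => //; tauto.
- rewrite T1; have [->|hx2] : x = 1 \/ 2 <= x by lia.
    by split => //; tauto.
  apply: strict_wrap; last lia.
  rewrite !expnS expn0; nia.
- apply: strict_wrap; last lia.
  have := @lemB x 2 hx; rewrite /W T2 /=.
  rewrite !expnS expn0; nia.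
- apply: strict_wrap; last lia.
  have := @key x j.+3 1 hx isT isT; by rewrite addn1.
Qed.

Lemma core2 x j : 1 <= x -> ~ (j = 1 /\ x = 1) ->
  (j.+2)^(j.+1) * x^(j.+2) <= 2 * T x j ^ 2 /\
  ((j.+2)^(j.+1) * x^(j.+2) = 2 * T x j ^ 2 <-> j = 0 \/ (j = 1 /\ x = 2)).
Proof.
move=> hx hex.
case: j hex => [|[|[|j]]] hex.
- rewrite T0 expn1; split => //; tauto.
- rewrite T1; have [->|hx2] : x = 2 \/ 3 <= x by lia.
    by split => //; tauto.
  apply: strict_wrap; last lia.
  rewrite !expnS expn0; nia.
- apply: strict_wrap; last lia.
  have := @lemB x 2 hx; rewrite /W T2 /=.
  rewrite !expnS expn0; nia.
- apply: strict_wrap; last lia.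
  have := @key x j.+3 2 hx isT isT; rewrite addn2 => h.
  apply: (leq_trans h); rewrite leq_pmull //.
Qed.

Lemma core3 x j : 1 <= x -> ~ (j = 1 /\ x <= 2) -> ~ (j = 2 /\ x = 1) ->
  (j.+3)^(j.+1) * x^(j.+2) <= 3 * T x j ^ 2 /\
  ((j.+3)^(j.+1) * x^(j.+2) = 3 * T x j ^ 2 <-> j = 0 \/ (j = 1 /\ x = 3)).
Proof.
move=> hx hex1 hex2.
case: j hex1 hex2 => [|[|[|j]]] hex1 hex2.
- rewrite T0 expn1; split => //; tauto.
- rewrite T1; have [->|hx2] : x = 3 \/ 4 <= x by lia.
    by split => //; tauto.
  apply: strict_wrap; last lia.
  rewrite !expnS expn0; nia.
- apply: strict_wrap; last lia.
  rewrite T2.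
  have hx2 : 2 <= x by lia.
  set u := x.+1 * (x * x.+1).+1.
  have hu : 7 * x <= u by rewrite /u; nia.
  have -> : x * x.+1 * (x * x.+1).+1 = x * u by rewrite /u mulnA.
  rewrite !expnS expn0; nia.
- apply: strict_wrap; last lia.
  have := @key x j.+3 3 hx isT isT; rewrite addn3 => h.
  apply: (leq_trans h); rewrite leq_pmull //.
Qed.

Lemma t2 g : sylv_t g 2 = g * g.+1.
Proof. by rewrite -[2]/(1+1) t_shift // t1. Qed.

Lemma tge2 g k : 1 <= g -> 2 <= k -> 2 <= sylv_t g k.
Proof.
move=> hg hk; have -> : k = (k - 1) + 1 by lia.
rewrite t_shift ?T1; last lia.
have := t_ge g (k - 1); nia.
Qed.

Lemma tge6 g k : 1 <= g -> 3 <= k -> 6 <= sylv_t g k.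
Proof.
move=> hg hk; have -> : k = (k - 2) + 2 by lia.
rewrite t_shift; last lia.
have h := t_ge g (k - 2).
have := @lemA (sylv_t g (k - 2)) 2 (leq_trans hg h).
have -> : W 2 = 6 by []. nia.
Qed.

Lemma pair3 (a b c a' b' c' : nat) : (a, b, c) = (a', b', c') <-> a = a' /\ b = b' /\ c = c'.
Proof. split; [by case=> -> -> -> | by case=> -> [-> ->]]. Qed.

Theorem lemma3p11 (g n : nat) (hg : 1 <= g) (hn : 3 <= n) :
  (forall r, 1 <= r <= n ->
     r ^ r * sylv_t g (n - r + 1) ^ r.+1 <= sylv_t g n ^ 2 /\
     (r ^ r * sylv_t g (n - r + 1) ^ r.+1 = sylv_t g n ^ 2 <-> r = 1))
  /\
  ((n, g) <> (3, 1) ->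
   forall r, 1 <= r <= n - 1 ->
     r.+1 ^ r * sylv_t g (n - r) ^ r.+1 <= 2 * sylv_t g (n - 1) ^ 2 /\
     (r.+1 ^ r * sylv_t g (n - r) ^ r.+1 = 2 * sylv_t g (n - 1) ^ 2 <->
        r = 1 \/ (g, r, n) = (1, 2, 4) \/ (g, r, n) = (2, 2, 3)))
  /\
  (~ ((n, g) = (4, 1) \/ (n, g) = (4, 2) \/ (n, g) = (5, 1)) ->
   forall r, 1 <= r <= n - 2 ->
     r.+2 ^ r * sylv_t g (n - r - 1) ^ r.+1 <= 3 * sylv_t g (n - 2) ^ 2 /\
     (r.+2 ^ r * sylv_t g (n - r - 1) ^ r.+1 = 3 * sylv_t g (n - 2) ^ 2 <->
        r = 1 \/ (g, r, n) = (3, 2, 4))).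
Proof.
have tpos k : 1 <= sylv_t g k by apply: leq_trans hg (t_ge g k).
split; [|split].
- move=> r /andP [hr1 hrn].
  have [j ej] : exists j, r = j.+1 by exists r.-1; lia.
  subst r.
  have e : sylv_t g n = T (sylv_t g (n - j)) j.
    by rewrite -t_shift; [f_equal; lia | lia].
  rewrite (_ : n - j.+1 + 1 = n - j); last lia.
  rewrite e; case: (@core1 _ j (tpos (n - j))) => h1 h2; split => //.
  rewrite h2; split; last by case=> ->; left.
  case=> [->//|[ej ex]]; subst j.
  have := @tge2 g _ hg (_ : 2 <= n - 1); lia.
- move=> hex r /andP [hr1 hrn].
  have [j ej] : exists j, r = j.+1 by exists r.-1; lia.
  subst r.
  have e : sylv_t g (n - 1) = T (sylv_t g (n - j.+1)) j.
    by rewrite -t_shift; [f_equal; lia | lia].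
  rewrite e.
  have hx : ~ (j = 1 /\ sylv_t g (n - j.+1) = 1).
    case=> ej ex; subst j.
    have [en|hn4] : n = 3 \/ 4 <= n by lia.
      subst n; move: ex; rewrite t1 => eg; subst g; exact: hex.
    have := @tge2 g _ hg (_ : 2 <= n - 2); lia.
  case: (@core2 _ _ (tpos _) hx) => // h1 h2; split => //.
  rewrite h2 !pair3.
  case: j {e hx h1 h2} hrn hr1 => [|[|j]] hrn hr1.
  + split => _; [by left | by left].
  + have [en|[en|hn5]] : n = 3 \/ n = 4 \/ 5 <= n by lia.
    * subst n; rewrite t1; split; [case=> [//|[_ ->]]; right; right; lia|].
      case=> [//|[[_ [_ //]]|[-> _]]]; by right.
    * subst n; rewrite t2; split.
        case=> [//|[_ ex]]; right; left; split => //; nia.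
      case=> [//|[[-> _]|[_ [_ //]]]]; by right.
    * have := @tge6 g _ hg (_ : 3 <= n - 2); split; [|lia].
      case=> [//|[_ ex]]; lia.
  + split; [lia|]. case=> [//|[[_ [h _]]|[_ [h _]]]]; lia.
- move=> hex r /andP [hr1 hrn].
  have [j ej] : exists j, r = j.+1 by exists r.-1; lia.
  subst r.
  have e : sylv_t g (n - 2) = T (sylv_t g (n - j.+1 - 1)) j.
    by rewrite -t_shift; [f_equal; lia | lia].
  rewrite e.
  have hx1 : ~ (j = 1 /\ sylv_t g (n - j.+1 - 1) <= 2).
    case=> ej ex; subst j.
    have [en|[en|hn6]] : n = 4 \/ n = 5 \/ 6 <= n by lia.
    * subst n; move: ex; rewrite t1 => eg; apply: hex.
      have [->|->] : g = 1 \/ g = 2 by lia.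
        by left. by right; left.
    * subst n; move: ex; rewrite t2 => eg; apply: hex.
      have -> : g = 1 by nia.
      by right; right.
    * have := @tge6 g (n - 2 - 1) hg ltac:(lia); lia.
  have hx2 : ~ (j = 2 /\ sylv_t g (n - j.+1 - 1) = 1).
    case=> ej ex; subst j.
    have [en|hn6] : n = 5 \/ 6 <= n by lia.
    * subst n; move: ex; rewrite t1 => eg; subst g; apply: hex; by right; right.
    * have := @tge2 g (n - 3 - 1) hg ltac:(lia); lia.
  case: (@core3 _ _ (tpos _) hx1 hx2) => h1 h2; split => //.
  rewrite h2 !pair3.
  case: j {e hx1 hx2 h1 h2} hrn hr1 => [|[|j]] hrn hr1.
  + split => _; by left.
  + have [en|[en|hn6]] : n = 4 \/ n = 5 \/ 6 <= n by lia.
    * subst n; rewrite t1; split; [case=> [//|[_ ->]]; right; lia|].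
      case=> [//|[-> _]]; by right.
    * subst n; rewrite t2; split.
        case=> [//|[_ ex]]; nia.
      case=> [//|[_ [_ //]]].
    * have := @tge6 g (n - 2 - 1) hg ltac:(lia); split; [|lia].
      case=> [//|[_ ex]]; lia.
  + split; [lia|]. case=> [//|[_ [h _]]]; lia.
Qed.
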